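(* Suppose Assumption (A1) holds and, in addition, $A$ is $\rho$-strongly monotone w.r.t. $S$ for some $\rho>0$, i.e. $\langle u-v,x-y\rangle\ge\rho\|x-y\|_S^2$ for all $(x,u),(y,v)\in\operatorname{gra}A$. Assume $\bar L:=\sup_k L_k<1$ and that there exist $\varepsilon_1,\varepsilon_2>0$ and $t>0$ such that for every integer $k\ge1$: $\gamma_k<1/\varepsilon_1$, $$t\Big(1+\frac{L_k}{\varepsilon_2}\Big)\le 2\gamma_k\rho(1-\gamma_k\varepsilon_1),\qquad t\,L_k(\varepsilon_2+1)\le \kappa_k+\nu_k,$$ where $\kappa_k=1-L_{k-1}-L_k-2\gamma_kL_k\mu-\gamma_k^2\mu^2-\frac{\gamma_k\beta}{2}$ and $\nu_k=2\gamma_k^2\rho\mu^2\big(\gamma_k-\frac1{\varepsilon_1}\big)$. Let $x^*\in\operatorname{zer}(A+B+C)$. Then for any $x_0,u_0\in\mathcal H$ the sequences generated by Algorithm NFBHF-M satisfy, for all $k\ge1$, $$(1-L_k)\|x_{k+1}-x^*\|_S^2\le\frac{\Phi_1(x^* )}{(1+t)^k},$$ where $\Phi_1(x^* )=\|x_1-x^*\|_S^2+2\langle u_1,x_1-x^*\rangle+L_0\|y_0-x_0\|_S^2$; in particular $\{x_k\}$ converges $R$-linearly to $x^*$.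
   Context: $\mathcal H$ is a real Hilbert space. $\mathcal P(\mathcal H)$ denotes the set of bounded linear operators $S:\mathcal H\to\mathcal H$ that are self-adjoint and strongly positive ($\langle Sx,x\rangle\ge m\|x\|^2$ for some $m>0$ and all $x$); for such $S$, $S^{-1}\in\mathcal P(\mathcal H)$, $\langle x,y\rangle_S:=\langle Sx,y\rangle$ and $\|x\|_S:=\sqrt{\langle Sx,x\rangle}$. For $S\in\mathcal P(\mathcal H)$, a single-valued $T:\mathcal H\to\mathcal H$ is $L$-Lipschitz continuous w.r.t. $S$ if $\|Tx-Ty\|_{S^{-1}}\le L\|x-y\|_S$ for all $x,y$, and is $\beta^{-1}$-cocoercive w.r.t. $S$ ($\beta>0$) if $\langle Tx-Ty,x-y\rangle\ge \beta^{-1}\|Tx-Ty\|_{S^{-1}}^2$ for all $x,y$. $\operatorname{gra}A=\{(x,u):u\in Ax\}$; $\operatorname{zer}(A+B+C)=\{x\in\mathcal H: 0\in Ax+Bx+Cx\}$. Assumption (A1): fix $S\in\mathcal P(\mathcal H)$. (i) $A:\mathcal H\to2^{\mathcal H}$ is maximally monotone; (ii) $B:\mathcal H\to\mathcal H$ is single-valued, monotone and $\mu$-Lipschitz continuous w.r.t. $S$ ($\mu\ge0$); (iii) $C:\mathcal H\to\mathcal H$ is $\beta^{-1}$-cocoercive w.r.t. $S$ for some $\beta>0$; (iv) $\operatorname{zer}(A+B+C)\neq\emptyset$; (v) there is $\gamma>0$ and, for each $k\in\mathbb N$, a step-size $\gamma_k\ge\gamma$, a constant $L_k\in[0,1)$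 and a (possibly nonlinear) operator $M_k:\mathcal H\to\mathcal H$ such that $\gamma_kM_k-S$ is $L_k$-Lipschitz continuous w.r.t. $S$. (Under (v), $(M_k+A)^{-1}$ is single-valued with full domain.) Algorithm NFBHF-M: given $x_0,u_0\in\mathcal H$, for $k=0,1,2,\dots$ $$y_k=(M_k+A)^{-1}\big(M_kx_k-(B+C)x_k+\gamma_k^{-1}u_k\big),\quad x_{k+1}=y_k-\gamma_kS^{-1}By_k+\gamma_kS^{-1}Bx_k,\quad u_{k+1}=(\gamma_kM_k-S)y_k-(\gamma_kM_k-S)x_k.$$ *)

(* Defs.v *)
From HB Require Import structures.
From mathcomp Require Import all_boot all_order all_algebra.
From mathcomp Require Import reals.
Set Implicit Arguments.
Unset Strict Implicit.
Unset Printing Implicit Defensive.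
Import Order.TTheory GRing.Theory Num.Theory.
Local Open Scope ring_scope.

Record inner_product (R : realType) (V : lmodType R) := InnerProduct {
  inner : V -> V -> R;
  inner_sym : forall x y, inner x y = inner y x;
  inner_linear : forall (a : R) (x y z : V),
      inner (a *: x + y) z = a * inner x z + inner y z;
  inner_ge0 : forall x, 0 <= inner x x;
  inner_eq0 : forall x, inner x x = 0 -> x = 0 }.

Section Hilbert.
Variables (R : realType) (V : lmodType R) (ip : inner_product V).

Definition hnorm (x : V) : R := Num.sqrt (inner ip x x).

Definition hilbert_complete : Prop :=
  forall u : nat -> V,
    (forall e : R, 0 < e -> exists N, forall m n, (N <= m)%N -> (N <= n)%N ->
        hnorm (u m - u n) < e) ->
    exists l : V, forall e : R, 0 < e -> exists N, forall n, (N <= n)%N ->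
        hnorm (u n - l) < e.

Definition snorm (S : V -> V) (x : V) : R := Num.sqrt (inner ip (S x) x).

Definition in_P (S : V -> V) : Prop :=
  (forall (a : R) (x y : V), S (a *: x + y) = a *: S x + S y) /\
  (exists c : R, forall x, hnorm (S x) <= c * hnorm x) /\
  (forall x y, inner ip (S x) y = inner ip x (S y)) /\
  (exists m : R, 0 < m /\ forall x, m * hnorm x ^+ 2 <= inner ip (S x) x).

(* set-valued operators are given by their graph: A x u  <->  u \in A x *)
Definition monotone_set (A : V -> V -> Prop) : Prop :=
  forall x u y v, A x u -> A y v -> 0 <= inner ip (u - v) (x - y).

Definition maximal_monotone (A : V -> V -> Prop) : Prop :=
  monotone_set A /\
  forall x u, (forall y v, A y v -> 0 <= inner ip (u - v) (x - y)) -> A x u.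

Definition strongly_monotone_wrt (S : V -> V) (rho : R) (A : V -> V -> Prop) :=
  forall x u y v, A x u -> A y v ->
    rho * snorm S (x - y) ^+ 2 <= inner ip (u - v) (x - y).

Definition monotone_op (T : V -> V) : Prop :=
  forall x y, 0 <= inner ip (T x - T y) (x - y).

Definition lipschitz_wrt (S Sinv : V -> V) (L : R) (T : V -> V) : Prop :=
  forall x y, snorm Sinv (T x - T y) <= L * snorm S (x - y).

Definition cocoercive_wrt (Sinv : V -> V) (beta : R) (T : V -> V) : Prop :=
  forall x y, beta^-1 * snorm Sinv (T x - T y) ^+ 2 <= inner ip (T x - T y) (x - y).

End Hilbert.

(* Main.v *)
Require Import Defs.
From HB Require Import structures.
From mathcomp Require Import all_boot all_order all_algebra.
From mathcomp Require Import reals.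
From mathcomp Require Import ring lra.
Import Order.TTheory GRing.Theory Num.Theory.
Local Open Scope ring_scope.

Lemma real_step (R : realFieldType)
  (g Lp Lk mu beta rho eps1 eps2 t np nh nc nuk nu1 nd W
   Ee Eh Ed Peh Ped Uke Ukh U1e U1d Ce Ch Bme : R) :
  0 < g -> 0 <= Lp -> 0 <= Lk -> 0 <= mu -> 0 < beta -> 0 < rho -> 0 < eps1 ->
  0 < eps2 -> 0 < t -> 0 <= np -> 0 <= nh -> 0 <= nc -> 0 <= nuk -> 0 <= nu1 ->
  0 <= nd -> 0 <= W ->
  g < 1 / eps1 ->
  t * (1 + Lk / eps2) <= 2 * g * rho * (1 - g * eps1) ->
  t * Lk * (eps2 + 1) <= (1 - Lp - Lk - 2 * g * Lk * mu - g ^+ 2 * mu ^+ 2 - g * beta / 2)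
                          + 2 * g ^+ 2 * rho * mu ^+ 2 * (g - 1 / eps1) ->
  W ^+ 2 = Ee - 2 * g * Ped + g ^+ 2 * Ed ->
  Eh = nh ^+ 2 -> Ed = nd ^+ 2 ->
  g * (rho * Ee) <= - Peh - U1e + Uke - g * Bme + g * Ped - g * Ce ->
  0 <= Bme ->
  beta^-1 * nc ^+ 2 <= Ce - Ch ->
  - Ch <= nc * nh ->
  Ukh <= nuk * nh -> nuk <= Lp * np ->
  - U1d <= nu1 * nd -> nu1 <= Lk * nh -> nd <= mu * nh ->
  U1e - g * U1d <= nu1 * W ->
  0 <= eps1 ^+ 2 * Ee + 2 * eps1 * (1 - g * eps1) * Ped + (1 - g * eps1) ^+ 2 * Ed ->
  (1 + t) * (W ^+ 2 + 2 * (U1e - g * U1d) + Lk * nh ^+ 2)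
   <= (Ee - 2 * Peh + Eh) + 2 * (Uke - Ukh) + Lp * np ^+ 2.
Proof.
move=> g0 Lp0 Lk0 mu0 be0 rh0 e10 e20 t0 np0 nh0 nc0 nuk0 nu10 nd0 W0 ge1 c2 c3
  HW HEh HEd HSM HBm HC HCh HUk HLp HU1d HLk Hmu HU1 HB6.
set kappa := (1 - Lp - Lk - 2 * g * Lk * mu - g ^+ 2 * mu ^+ 2 - g * beta / 2).
have s0 : 0 < 1 - g * eps1.
  move: ge1; rewrite ltr_pdivlMr // => ?; lra.
have hCe : 2 * g * Ce >= 2 * g * Ch + 2 * g * (beta^-1 * nc ^+ 2).
  have := ler_wpM2l (ltW (mulr_gt0 (ltr0n _ 2) g0)) HC. lra.
have hq : 2 * g * (beta^-1 * nc ^+ 2) - 2 * g * (nc * nh) >= - (g * beta / 2 * nh ^+ 2).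
  have : 0 <= g * beta^-1 * (2 * nc - beta * nh) ^+ 2.
    by rewrite mulr_ge0 ?sqr_ge0 // mulr_ge0 // ltW // invr_gt0.
  have hb : beta * beta^-1 = 1 by rewrite mulfV // gt_eqF.
  move=> h; have : g * beta^-1 * (2 * nc - beta * nh) ^+ 2 =
     2 * (2 * g * (beta^-1 * nc ^+ 2) - 2 * g * (nc * nh) + (g * beta / 2 * nh ^+ 2)).
    rewrite -[X in _ = 2 * (_ - _ + (g * X / 2 * _))]mul1r -hb; field; by rewrite ?(lt0r_neq0 be0) ?(lt0r_neq0 e20) ?(lt0r_neq0 e10).
  lra.
have hCh : 2 * g * Ch >= - (2 * g * (nc * nh)).
  have := ler_wpM2l (ltW (mulr_gt0 (ltr0n _ 2) g0)) HCh. lra.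
have hUk : 2 * Ukh <= Lp * (np ^+ 2 + nh ^+ 2).
  have h1 : nuk * nh <= Lp * np * nh by rewrite ler_wpM2r.
  have h2 : 2 * (np * nh) <= np ^+ 2 + nh ^+ 2 by have := sqr_ge0 (np - nh); lra.
  have := ler_wpM2l Lp0 h2. nra.
have hEd : g ^+ 2 * Ed <= g ^+ 2 * mu ^+ 2 * nh ^+ 2.
  rewrite HEd -mulrA ler_wpM2l ?sqr_ge0 // -exprMn ler_pXn2r ?nnegrE //.
  by rewrite mulr_ge0.
have hU1d : - (2 * g * U1d) <= 2 * g * Lk * mu * nh ^+ 2.
  have h1 : nu1 * nd <= Lk * nh * (mu * nh).
    apply: ler_pM => //. 
  have := ler_wpM2l (ltW (mulr_gt0 (ltr0n _ 2) g0)) (le_trans HU1d h1). nra.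
have hgB : 0 <= g * Bme by rewrite mulr_ge0 // ltW.
have stepA : (Ee - 2 * Peh + Eh) + 2 * (Uke - Ukh) + Lp * np ^+ 2
   - (W ^+ 2 + 2 * (U1e - g * U1d) + Lk * nh ^+ 2) >= 2 * g * rho * Ee + kappa * nh ^+ 2.
  rewrite /kappa HW HEh. nra.
have hU1 : 2 * (U1e - g * U1d) <= Lk * (W ^+ 2 / eps2 + eps2 * nh ^+ 2).
  have h1 : nu1 * W <= Lk * nh * W by rewrite ler_wpM2r.
  have h2 : 2 * (nh * W) <= W ^+ 2 / eps2 + eps2 * nh ^+ 2.
    have : 0 <= (W - eps2 * nh) ^+ 2 / eps2 by rewrite divr_ge0 ?sqr_ge0 // ltW.
    have -> : (W - eps2 * nh) ^+ 2 / eps2 = W ^+ 2 / eps2 + eps2 * nh ^+ 2 - 2 * (nh * W).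
      field; by rewrite ?(lt0r_neq0 be0) ?(lt0r_neq0 e20) ?(lt0r_neq0 e10).
    lra.
  have := ler_wpM2l Lk0 h2. nra.
have hW : (1 - g * eps1) * W ^+ 2 <= Ee + g * (1 / eps1 - g) * (mu ^+ 2 * nh ^+ 2).
  have hEd2 : Ed <= mu ^+ 2 * nh ^+ 2.
    rewrite HEd -exprMn ler_pXn2r ?nnegrE // mulr_ge0 //.
  have hc : 0 <= g * (1 / eps1 - g) by rewrite mulr_ge0 ?ltW // subr_gt0.
  have := ler_wpM2l hc hEd2.
  have : (1 - g * eps1) * W ^+ 2 - Ee - g * (1 / eps1 - g) * Ed =
      - (g / eps1) * (eps1 ^+ 2 * Ee + 2 * eps1 * (1 - g * eps1) * Ped + (1 - g * eps1) ^+ 2 * Ed).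
    rewrite HW; field; by rewrite ?(lt0r_neq0 be0) ?(lt0r_neq0 e20) ?(lt0r_neq0 e10).
  have : 0 <= g / eps1 * (eps1 ^+ 2 * Ee + 2 * eps1 * (1 - g * eps1) * Ped + (1 - g * eps1) ^+ 2 * Ed).
    by rewrite mulr_ge0 // divr_ge0 // ltW.
  lra.
have stepB : t * (W ^+ 2 + 2 * (U1e - g * U1d) + Lk * nh ^+ 2) <= 2 * g * rho * Ee + kappa * nh ^+ 2.
  have e1 : t * (W ^+ 2 + 2 * (U1e - g * U1d) + Lk * nh ^+ 2) <=
     t * (1 + Lk / eps2) * W ^+ 2 + t * Lk * (eps2 + 1) * nh ^+ 2.
    have := ler_wpM2l (ltW t0) hU1.
    have -> : Lk * (W ^+ 2 / eps2 + eps2 * nh ^+ 2) = Lk / eps2 * W ^+ 2 + Lk * eps2 * nh ^+ 2.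
      by field; by rewrite ?(lt0r_neq0 be0) ?(lt0r_neq0 e20) ?(lt0r_neq0 e10).
    nra.
  have e2 : t * (1 + Lk / eps2) * W ^+ 2 <= 2 * g * rho * (1 - g * eps1) * W ^+ 2.
    by rewrite ler_wpM2r ?sqr_ge0.
  have e3 : t * Lk * (eps2 + 1) * nh ^+ 2 <=
      (kappa + 2 * g ^+ 2 * rho * mu ^+ 2 * (g - 1 / eps1)) * nh ^+ 2.
    by rewrite ler_wpM2r ?sqr_ge0.
  have e4 := ler_wpM2l (ltW (mulr_gt0 (mulr_gt0 (ltr0n _ 2) g0) rh0)) hW.
  have : 2 * g * rho * (g * (1 / eps1 - g) * (mu ^+ 2 * nh ^+ 2)) =
     - (2 * g ^+ 2 * rho * mu ^+ 2 * (g - 1 / eps1)) * nh ^+ 2 by ring.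
  nra.
lra.
Qed.

Lemma t1 (V : zmodType) (y a b z : V) : y - a + b - z = (y - z) - (a - b).
Proof. rewrite opprB !addrA [y - a + b]addrAC -!addrA; congr (_ + _).
by rewrite [RHS]addrCA [- z + _]addrC. Qed.
Lemma t2 (V : zmodType) (x y z : V) : x - z = (y - z) - (y - x).
Proof. by rewrite opprB [RHS]addrC addrA subrK. Qed.

Section Vec.
Variables (R : realType) (V : lmodType R) (ip : inner_product V).
Local Notation ii := (inner ip).

Lemma ip0l z : ii 0 z = 0.
Proof.
have := inner_linear ip 1 0 0 z; rewrite scaler0 addr0 mul1r => h.
lra.
Qed.
Lemma ipDl a b z : ii (a + b) z = ii a z + ii b z.
Proof. by have := inner_linear ip 1 a b z; rewrite scale1r mul1r. Qed.
Lemma ipZl r a z : ii (r *: a) z = r * ii a z.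
Proof. by have := inner_linear ip r a 0 z; rewrite addr0 ip0l addr0. Qed.
Lemma ipNl a z : ii (- a) z = - ii a z.
Proof. by rewrite -scaleN1r ipZl mulN1r. Qed.
Lemma ipBl a b z : ii (a - b) z = ii a z - ii b z.
Proof. by rewrite ipDl ipNl. Qed.
Lemma ipDr a b z : ii z (a + b) = ii z a + ii z b.
Proof. by rewrite inner_sym ipDl !(inner_sym ip z). Qed.
Lemma ipZr r a z : ii z (r *: a) = r * ii z a.
Proof. by rewrite inner_sym ipZl (inner_sym ip z). Qed.
Lemma ipNr a z : ii z (- a) = - ii z a.
Proof. by rewrite inner_sym ipNl (inner_sym ip z). Qed.
Lemma ipBr a b z : ii z (a - b) = ii z a - ii z b.
Proof. by rewrite ipDr ipNr. Qed.

Variables (S Sinv : V -> V).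
Hypothesis HS : in_P ip S.
Hypothesis HSinv : forall x, S (Sinv x) = x /\ Sinv (S x) = x.

Lemma Slin a x y : S (a *: x + y) = a *: S x + S y.
Proof. by case: HS. Qed.
Lemma Ssym x y : ii (S x) y = ii x (S y).
Proof. by case: HS => _ [_ []]. Qed.
Lemma S0 : S 0 = 0.
Proof.
have := Slin 1 0 0; rewrite scaler0 addr0 scale1r => h.
by apply: (addrI (S 0)); rewrite addr0 -h.
Qed.
Lemma SD x y : S (x + y) = S x + S y.
Proof. by have := Slin 1 x y; rewrite !scale1r. Qed.
Lemma SZ a x : S (a *: x) = a *: S x.
Proof. by have := Slin a x 0; rewrite !addr0 S0 addr0. Qed.
Lemma SN x : S (- x) = - S x.
Proof. by rewrite -scaleN1r SZ scaleN1r. Qed.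
Lemma SB x y : S (x - y) = S x - S y.
Proof. by rewrite SD SN. Qed.
Lemma SK x : S (Sinv x) = x. Proof. by case: (HSinv x). Qed.
Lemma SinvK x : Sinv (S x) = x. Proof. by case: (HSinv x). Qed.
Lemma SinvB x y : Sinv x - Sinv y = Sinv (x - y).
Proof. by rewrite -[LHS]SinvK SB !SK. Qed.
Lemma SinvN x : Sinv (- x) = - Sinv x.
Proof. by rewrite -[RHS]SinvK SN SK. Qed.

Lemma bsym x y : ii (S x) y = ii (S y) x.
Proof. by rewrite Ssym inner_sym. Qed.
Lemma b_ge0 x : 0 <= ii (S x) x.
Proof.
case: HS => _ [_ [_ [m [m0 hm]]]].
apply: le_trans (hm x); rewrite /hnorm sqr_sqrtr ?inner_ge0 //.
by rewrite mulr_ge0 ?inner_ge0 // ltW.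
Qed.
Lemma bd_eq u : ii (Sinv u) u = ii (S (Sinv u)) (Sinv u).
Proof. by rewrite {1}(_ : u = S (Sinv u)) ?SK // inner_sym. Qed.
Lemma snorm_sq x : snorm ip S x ^+ 2 = ii (S x) x.
Proof. by rewrite /snorm sqr_sqrtr // b_ge0. Qed.
Lemma snormI_eq u : snorm ip Sinv u = snorm ip S (Sinv u).
Proof. by rewrite /snorm bd_eq. Qed.
Lemma snormI_sq u : snorm ip Sinv u ^+ 2 = ii (Sinv u) u.
Proof. by rewrite snormI_eq snorm_sq bd_eq. Qed.
Lemma snormN x : snorm ip S (- x) = snorm ip S x.
Proof. by rewrite /snorm SN ipNl ipNr opprK. Qed.
Lemma snorm_ge0 T x : 0 <= snorm ip T x.
Proof. exact: sqrtr_ge0. Qed.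

Lemma cs_b a c : ii (S a) c <= snorm ip S a * snorm ip S c.
Proof.
set A := ii (S a) a; set P := ii (S a) c; set C := ii (S c) c.
have Q : forall s, 0 <= A - 2 * s * P + s ^+ 2 * C.
  move=> s; have := b_ge0 (a - s *: c).
  rewrite SB SZ !ipBl !ipZl !ipBr !ipZr (bsym c a) -/A -/P -/C.
  move=> h; lra.
have A0 : 0 <= A := b_ge0 a.
have C0 : 0 <= C := b_ge0 c.
have N0 : 0 <= snorm ip S a * snorm ip S c by rewrite mulr_ge0 ?snorm_ge0.
case: (lerP P 0) => [hP|hP]; first exact: le_trans hP N0.
case: (ltgtP C 0) => hC; first by move: hC; rewrite ltNge C0.
- have := Q (P / C).
  have -> : A - 2 * (P / C) * P + (P / C) ^+ 2 * C = A - P ^+ 2 / C.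
    by field; rewrite lt0r_neq0.
  rewrite subr_ge0 ler_pdivrMr // => hPP.
  rewrite /snorm -sqrtrM // -/A -/C.
  rewrite -(ger0_norm (ltW hP)) -sqrtr_sqr ler_sqrt // ?mulr_ge0 //; lra.
- have := Q ((A + 1) / (2 * P)).
  rewrite hC mulr0 addr0.
  have -> : A - 2 * ((A + 1) / (2 * P)) * P = - 1.
    by field; rewrite lt0r_neq0.
  lra.
Qed.

Lemma cs u v : ii u v <= snorm ip Sinv u * snorm ip S v.
Proof. by rewrite snormI_eq -{1}(SK u) cs_b. Qed.


Lemma step (x y w z uk uk1 Mx My Bx By Bz Cx Cz : V)
  (g Lp Lk mu beta rho eps1 eps2 t np : R) :
  0 < g -> 0 <= Lp -> 0 <= Lk -> 0 <= mu -> 0 < beta -> 0 < rho -> 0 < eps1 ->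
  0 < eps2 -> 0 < t -> 0 <= np ->
  g < 1 / eps1 ->
  t * (1 + Lk / eps2) <= 2 * g * rho * (1 - g * eps1) ->
  t * Lk * (eps2 + 1) <= (1 - Lp - Lk - 2 * g * Lk * mu - g ^+ 2 * mu ^+ 2 - g * beta / 2)
                          + 2 * g ^+ 2 * rho * mu ^+ 2 * (g - 1 / eps1) ->
  w = y - g *: Sinv By + g *: Sinv Bx ->
  uk1 = (g *: My - S y) - (g *: Mx - S x) ->
  snorm ip Sinv uk <= Lp * np ->
  snorm ip Sinv uk1 <= Lk * snorm ip S (y - x) ->
  snorm ip Sinv (By - Bx) <= mu * snorm ip S (y - x) ->
  0 <= ii (By - Bz) (y - z) ->
  beta^-1 * snorm ip Sinv (Cx - Cz) ^+ 2 <= ii (Cx - Cz) (x - z) ->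
  rho * snorm ip S (y - z) ^+ 2 <=
     ii ((Mx - (Bx + Cx) + g^-1 *: uk - My) - (- (Bz + Cz))) (y - z) ->
  (1 + t) * (snorm ip S (w - z) ^+ 2 + 2 * ii uk1 (w - z) + Lk * snorm ip S (y - x) ^+ 2)
   <= snorm ip S (x - z) ^+ 2 + 2 * ii uk (x - z) + Lp * np ^+ 2.
Proof.
move=> g0 Lp0 Lk0 mu0 be0 rh0 e10 e20 t0 np0 c1 c2 c3 Hw Hu1 HUk HLk HBl HBm HCc HSM.
have Hwz : w - z = (y - z) - g *: Sinv (By - Bx).
  by rewrite Hw t1 -scalerBr SinvB.
have Hxz : x - z = (y - z) - (y - x) by rewrite (@t2 _ x y z).
have HSd : S (Sinv (By - Bx)) = By - Bx by rewrite SK.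
have Hnd : snorm ip Sinv (By - Bx) = snorm ip S (Sinv (By - Bx)) by rewrite snormI_eq.
have HW : snorm ip S (w - z) ^+ 2 =
   ii (S (y - z)) (y - z) - 2 * g * ii (S (Sinv (By - Bx))) (y - z)
   + g ^+ 2 * ii (S (Sinv (By - Bx))) (Sinv (By - Bx)).
  rewrite snorm_sq Hwz SB SZ ipBl ipZl !(ipBr (y - z) (g *: Sinv (By - Bx))) !ipZr.
  rewrite (bsym (y - z) (Sinv (By - Bx))); ring.
have HEh : ii (S (y - x)) (y - x) = snorm ip S (y - x) ^+ 2 by rewrite snorm_sq.
have HEd : ii (S (Sinv (By - Bx))) (Sinv (By - Bx)) = snorm ip Sinv (By - Bx) ^+ 2.
  by rewrite Hnd snorm_sq.
have HSM' : g * (rho * ii (S (y - z)) (y - z)) <=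
   - ii (S (y - x)) (y - z) - ii uk1 (y - z) + ii uk (y - z)
   - g * ii (By - Bz) (y - z) + g * ii (S (Sinv (By - Bx))) (y - z)
   - g * ii (Cx - Cz) (y - z).
  have := ler_wpM2l (ltW g0) HSM; rewrite snorm_sq => h; apply: (le_trans h).
  rewrite le_eqVlt; apply/orP; left; apply/eqP.
  rewrite HSd Hu1 !SB !(ipBl, ipDl, ipNl, ipZl).
  field; exact: lt0r_neq0.
have HCe : beta^-1 * snorm ip Sinv (Cx - Cz) ^+ 2 <=
    ii (Cx - Cz) (y - z) - ii (Cx - Cz) (y - x).
  by rewrite -ipBr -Hxz.
have HCh : - ii (Cx - Cz) (y - x) <= snorm ip Sinv (Cx - Cz) * snorm ip S (y - x).
  by rewrite -ipNr -(snormN (y - x)) cs.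
have HU1d : - ii uk1 (Sinv (By - Bx)) <= snorm ip Sinv uk1 * snorm ip Sinv (By - Bx).
  by rewrite -ipNr Hnd -(snormN (Sinv _)) cs.
have HU1 : ii uk1 (y - z) - g * ii uk1 (Sinv (By - Bx)) <=
    snorm ip Sinv uk1 * snorm ip S (w - z).
  by rewrite -ipZr -ipBr -Hwz cs.
have HB6 : 0 <= eps1 ^+ 2 * ii (S (y - z)) (y - z)
   + 2 * eps1 * (1 - g * eps1) * ii (S (Sinv (By - Bx))) (y - z)
   + (1 - g * eps1) ^+ 2 * ii (S (Sinv (By - Bx))) (Sinv (By - Bx)).
  have := b_ge0 (eps1 *: (y - z) + (1 - g * eps1) *: Sinv (By - Bx)).
  rewrite (SD (eps1 *: (y - z))) !SZ ipDl !ipZl !(ipDr (eps1 *: (y - z))) !ipZr.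
  rewrite (bsym (y - z) (Sinv (By - Bx))).
  move=> h; apply: (le_trans h); rewrite le_eqVlt; apply/orP; left; apply/eqP; ring.
have HUkh := cs uk (y - x).
have key := @real_step R _ _ _ _ _ _ _ _ _ _ _ _ _ _ _ _ _ _ _ _ _ _ _ _ _ _ _ _
  g0 Lp0 Lk0 mu0 be0 rh0 e10 e20 t0 np0 (snorm_ge0 _ _) (snorm_ge0 _ _)
  (snorm_ge0 _ _) (snorm_ge0 _ _) (snorm_ge0 _ _) (snorm_ge0 _ _) c1 c2 c3 HW
  HEh HEd HSM' HBm HCe HCh HUkh HUk HU1d HLk HBl HU1 HB6.
have E1 : ii uk1 (w - z) = ii uk1 (y - z) - g * ii uk1 (Sinv (By - Bx)).
  by rewrite Hwz ipBr ipZr.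
have E2 : snorm ip S (x - z) ^+ 2 + 2 * ii uk (x - z) =
   (ii (S (y - z)) (y - z) - 2 * ii (S (y - x)) (y - z) + ii (S (y - x)) (y - x))
   + 2 * (ii uk (y - z) - ii uk (y - x)).
  rewrite snorm_sq Hxz (SB (y - z) (y - x)) (ipBl (S (y - z)) (S (y - x))).
  rewrite !(ipBr (y - z) (y - x)) (bsym (y - z) (y - x)); ring.
by rewrite E1 E2.
Qed.

End Vec.

Theorem theorem3p2
  (R : realType) (V : lmodType R) (ip : inner_product V)
  (Hcomplete : hilbert_complete ip)
  (* (A1) *)
  (S Sinv : V -> V) (HS : in_P ip S)
  (HSinv : forall x, S (Sinv x) = x /\ Sinv (S x) = x)
  (A : V -> V -> Prop) (B C : V -> V) (mu beta : R)
  (HA : maximal_monotone ip A)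
  (HBmon : monotone_op ip B) (Hmu : 0 <= mu) (HBlip : lipschitz_wrt ip S Sinv mu B)
  (Hbeta : 0 < beta) (HC : cocoercive_wrt ip Sinv beta C)
  (Hzer : exists z, A z (- (B z + C z)))
  (gam : R) (g L : nat -> R) (M : nat -> V -> V)
  (Hgam : 0 < gam) (Hg : forall k, gam <= g k)
  (HL : forall k, 0 <= L k /\ L k < 1)
  (HM : forall k, lipschitz_wrt ip S Sinv (L k) (fun x => g k *: M k x - S x))
  (* additional assumptions *)
  (rho : R) (Hrho : 0 < rho) (HAs : strongly_monotone_wrt ip S rho A)
  (HLbar : exists Lbar : R, Lbar < 1 /\ forall k, L k <= Lbar)
  (eps1 eps2 t : R) (Heps1 : 0 < eps1) (Heps2 : 0 < eps2) (Ht : 0 < t)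
  (Hcond : forall k : nat, (1 <= k)%N ->
     let kappa := 1 - L k.-1 - L k - 2 * g k * L k * mu - g k ^+ 2 * mu ^+ 2
                  - g k * beta / 2 in
     let nu := 2 * g k ^+ 2 * rho * mu ^+ 2 * (g k - 1 / eps1) in
     [/\ g k < 1 / eps1,
         t * (1 + L k / eps2) <= 2 * g k * rho * (1 - g k * eps1) &
         t * L k * (eps2 + 1) <= kappa + nu])
  (xs : V) (Hxs : A xs (- (B xs + C xs)))
  (x y u : nat -> V)
  (* Algorithm NFBHF-M: y_k = (M_k + A)^{-1}(M_k x_k - (B+C) x_k + g_k^{-1} u_k) *)
  (Hy : forall k, A (y k) (M k (x k) - (B (x k) + C (x k)) + (g k)^-1 *: u k
                           - M k (y k)))
  (Hx : forall k, x k.+1 = y k - g k *: Sinv (B (y k)) + g k *: Sinv (B (x k)))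
  (Hu : forall k, u k.+1 = (g k *: M k (y k) - S (y k)) - (g k *: M k (x k) - S (x k))) :
  let Phi1 := snorm ip S (x 1%N - xs) ^+ 2 + 2 * inner ip (u 1%N) (x 1%N - xs)
              + L 0%N * snorm ip S (y 0%N - x 0%N) ^+ 2 in
  (forall k : nat, (1 <= k)%N ->
     (1 - L k) * snorm ip S (x k.+1 - xs) ^+ 2 <= Phi1 / (1 + t) ^+ k) /\
  (exists c q : R, 0 <= q /\ q < 1 /\
     forall k : nat, hnorm ip (x k - xs) <= c * q ^+ k).
Proof.
move=> Phi1.
have HSinvB := HSinv.
set Phi := fun k : nat => snorm ip S (x k - xs) ^+ 2 + 2 * inner ip (u k) (x k - xs)
              + L k.-1 * snorm ip S (y k.-1 - x k.-1) ^+ 2.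
have gpos : forall k, 0 < g k by move=> k; exact: lt_le_trans Hgam (Hg k).
have t1 : 0 < 1 + t by rewrite addr_gt0.
have Hstep : forall k, (1 + t) * Phi k.+2 <= Phi k.+1.
  move=> k.
  have H := Hcond k.+1 isT; cbv zeta in H; case: H => c1 c2 c3.
  have hUk : snorm ip Sinv (u k.+1) <= L k * snorm ip S (y k - x k).
    by have := HM k (y k) (x k); rewrite /= -Hu.
  have hU1 : snorm ip Sinv (u k.+2) <= L k.+1 * snorm ip S (y k.+1 - x k.+1).
    by have := HM k.+1 (y k.+1) (x k.+1); rewrite /= -Hu.
  have := @step R V ip S Sinv HS HSinvB (x k.+1) (y k.+1) (x k.+2) xs (u k.+1) (u k.+2)
    (M k.+1 (x k.+1)) (M k.+1 (y k.+1)) (B (x k.+1)) (B (y k.+1)) (B xs)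
    (C (x k.+1)) (C xs) (g k.+1) (L k) (L k.+1) mu beta rho eps1 eps2 t
    (snorm ip S (y k - x k)) (gpos _) (proj1 (HL k)) (proj1 (HL k.+1)) Hmu Hbeta Hrho
    Heps1 Heps2 Ht (@snorm_ge0 _ _ ip _ _) c1 c2 c3 (Hx _) (Hu _) hUk hU1 (HBlip _ _)
    (HBmon _ _) (HC _ _) (HAs _ _ _ _ (Hy k.+1) Hxs).
  by [].
have Hind : forall n, Phi n.+1 * (1 + t) ^+ n <= Phi 1%N.
  elim=> [|n IH]; first by rewrite expr0 mulr1.
  apply: le_trans IH; rewrite exprS mulrA [Phi n.+2 * _]mulrC.
  by rewrite ler_wpM2r // exprn_ge0 // ltW.
have Hlow : forall k, (1 - L k) * snorm ip S (x k.+1 - xs) ^+ 2 <= Phi k.+1.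
  move=> k; rewrite /Phi /=.
  have hU1 : snorm ip Sinv (u k.+1) <= L k * snorm ip S (y k - x k).
    by have := HM k (y k) (x k); rewrite /= -Hu.
  have hcs := @cs _ _ ip S Sinv HS HSinvB (u k.+1) (- (x k.+1 - xs)).
  rewrite ipNr (@snormN _ _ ip S HS) in hcs.
  have n1 := @snorm_ge0 _ _ ip Sinv (u k.+1).
  have n2 := @snorm_ge0 _ _ ip S (x k.+1 - xs).
  have n3 := @snorm_ge0 _ _ ip S (y k - x k).
  have L0 := proj1 (HL k).
  have h2 : snorm ip Sinv (u k.+1) * snorm ip S (x k.+1 - xs) <=
            L k * snorm ip S (y k - x k) * snorm ip S (x k.+1 - xs).
    by rewrite ler_wpM2r.
  have h3 : 2 * (snorm ip S (y k - x k) * snorm ip S (x k.+1 - xs)) <=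
       snorm ip S (y k - x k) ^+ 2 + snorm ip S (x k.+1 - xs) ^+ 2.
    by have := sqr_ge0 (snorm ip S (y k - x k) - snorm ip S (x k.+1 - xs)); lra.
  have h4 := ler_wpM2l L0 h3.
  lra.
have Hmain : forall k, (1 - L k) * snorm ip S (x k.+1 - xs) ^+ 2 <= Phi1 / (1 + t) ^+ k.
  move=> k; apply: (le_trans (Hlow k)).
  rewrite ler_pdivlMr ?exprn_gt0 //; exact: Hind.
split.
  by move=> k _; exact: Hmain.
case: HLbar => Lb [Lb1 HLb].
case: (HS) => _ [_ [_ [m [m0 hm]]]].
have Lb0 : 0 < 1 - Lb by rewrite subr_gt0.
have Phi0 : 0 <= Phi1.
  have := Hmain 0%N; rewrite expr0 divr1; apply: le_trans.
  by rewrite mulr_ge0 ?sqr_ge0 // subr_ge0 ltW // (proj2 (HL 0%N)).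
set K := Phi1 / ((1 - Lb) * m).
have K0 : 0 <= K by rewrite divr_ge0 // mulr_ge0 // ltW.
set q := (2 + t) / (2 * (1 + t)).
have q0 : 0 < q by rewrite divr_gt0 // ?mulr_gt0 // addr_gt0.
have q1 : q < 1.
  by rewrite /q ltr_pdivrMr ?mulr_gt0 //; lra.
have rq : (1 + t)^-1 <= q ^+ 2.
  have e : q ^+ 2 - (1 + t)^-1 = t ^+ 2 / (4 * (1 + t) ^+ 2).
    by rewrite /q; field; rewrite lt0r_neq0.
  have : 0 <= t ^+ 2 / (4 * (1 + t) ^+ 2).
    by rewrite divr_ge0 ?sqr_ge0 // mulr_ge0 // sqr_ge0.
  lra.
have Hh : forall k, hnorm ip (x k.+1 - xs) ^+ 2 <= K * (q ^+ k) ^+ 2.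
  move=> k.
  have h1 := hm (x k.+1 - xs).
  rewrite -(@snorm_sq _ _ ip S HS) in h1.
  have h2 := Hmain k.
  have hL : (1 - Lb) <= 1 - L k by rewrite lerD2l lerN2 HLb.
  have hn := sqr_ge0 (snorm ip S (x k.+1 - xs)).
  have h3 : (1 - Lb) * (m * hnorm ip (x k.+1 - xs) ^+ 2) <= Phi1 / (1 + t) ^+ k.
    apply: le_trans h2; apply: le_trans (ler_wpM2l (ltW Lb0) h1) _.
    by rewrite ler_wpM2r.
  have h4 : Phi1 / (1 + t) ^+ k <= Phi1 * (q ^+ k) ^+ 2.
    rewrite -exprVn -exprM mulnC exprM ler_wpM2l //.
    apply: lerXn2r; rewrite ?nnegrE ?sqr_ge0 // invr_ge0 ltW //.
  rewrite /K mulrAC ler_pdivlMr ?mulr_gt0 //.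
  have := le_trans h3 h4. rewrite mulrA [_ * m]mulrC. nra.
exists ((K + 1) / q + hnorm ip (x 0%N - xs)), q; split; first exact: ltW.
split; first exact: q1.
have hq0 : 0 <= (K + 1) / q by apply: divr_ge0; [rewrite addr_ge0 | exact: ltW].
case=> [|k].
  by rewrite expr0 mulr1 lerDr.
have hx : hnorm ip (x k.+1 - xs) <= (K + 1) * q ^+ k.
  have q0' : 0 <= q := ltW q0.
  rewrite -(ler_pXn2r (isT : (0 < 2)%N)) ?nnegrE ?sqrtr_ge0 ?mulr_ge0 ?exprn_ge0 ?addr_ge0 //.
  apply: le_trans (Hh k) _; rewrite exprMn.
  by have := sqr_ge0 K; rewrite expr2; nra.
apply: le_trans hx _.
have e : (K + 1) / q * q ^+ k.+1 = (K + 1) * q ^+ k.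
  by rewrite exprS; field; rewrite lt0r_neq0.
by rewrite [in X in _ <= X]mulrDl e lerDl mulr_ge0 ?sqrtr_ge0 // exprn_ge0 // ltW.
Qed.
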